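(* Let $p\ge2$ be an integer, $R\ge1$, $A\in GL_r(\mathbb{C}((z)))$, $C,C'\in I+z^RM_r(\mathbb{C}[[z]])$ and $A_0,A_0'\in GL_r(\mathbb{C})$ with $$A_0=C(z/p)^{-1}A(z)C(z),\qquad A_0'=C'(z/p)^{-1}A(z)C'(z).$$ Then $A_0=A_0'$. If for no integer $i\ge R$ is $p^i$ an eigenvalue of the linear map $X\mapsto A_0^{-1}XA_0$ on $M_r(\mathbb{C})$, then $C=C'$. This last condition holds with $R=1$ if $A_0$ is $p$-restricted.
   Context: $A_0$ is $p$-restricted if all its eigenvalues $c$ satisfy $1\le|c|<p$. *)

(* Defs.v *)
(* The base field C = complex numbers is taken to be an
   arbitrary numClosedFieldType K (ℂ is one). *)
From HB Require Import structures.
From mathcomp Require Import all_boot all_order all_algebra.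
Set Implicit Arguments. Unset Strict Implicit. Unset Printing Implicit Defensive.
Import Order.TTheory GRing.Theory Num.Theory.
Local Open Scope ring_scope.

(* A matrix power series F(z) = \sum_k F k z^k in M_r(K[[z]]) is a
   coefficient sequence nat -> 'M[K]_r.
   A matrix Laurent series in M_r(K((z))) is represented by a pair (v, a)
   meaning z^{-v} * \sum_k a k z^k (every Laurent series has this form). *)

Section PS.
Variables (K : numClosedFieldType) (r : nat).

Definition psmul (F G : nat -> 'M[K]_r) : nat -> 'M[K]_r :=
  fun k => \sum_(i < k.+1) F i *m G (k - i)%N.

Definition psone : nat -> 'M[K]_r := fun k => if k == 0%N then 1%:M else 0.

Definition psdil (p : nat) (F : nat -> 'M[K]_r) : nat -> 'M[K]_r :=
  fun k => (p%:R ^- k) *: F k.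

Definition in_I_zR (R : nat) (C : nat -> 'M[K]_r) : Prop :=
  C 0%N = 1%:M /\ forall k, (0 < k < R)%N -> C k = 0.

Definition laurent_GL (v : nat) (a : nat -> 'M[K]_r) : Prop :=
  exists (w : nat) (b : nat -> 'M[K]_r),
    (forall k, psmul a b k = if k == (v + w)%N then 1%:M else 0) /\
    (forall k, psmul b a k = if k == (v + w)%N then 1%:M else 0).

(* A_0 = C(z/p)^{-1} A(z) C(z), where A(z) = z^{-v} \sum_k a k z^k :
   C(z/p) has a two-sided inverse D in M_r(K[[z]]) and D * A * C equals the
   constant A_0 (as Laurent series). *)
Definition mahler_gauge (p : nat) (v : nat) (a : nat -> 'M[K]_r)
    (C : nat -> 'M[K]_r) (A0 : 'M[K]_r) : Prop :=
  exists D : nat -> 'M[K]_r,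
    psmul D (psdil p C) = psone /\ psmul (psdil p C) D = psone /\
    forall k, psmul (psmul D a) C k = if k == v then A0 else 0.

Definition conj_eigenvalue (A0 : 'M[K]_r) (lam : K) : Prop :=
  exists X : 'M[K]_r, X != 0 /\ invmx A0 *m X *m A0 = lam *: X.

Definition p_restricted (p : nat) (A0 : 'M[K]_r) : Prop :=
  forall c : K, eigenvalue A0 c -> 1 <= `|c| < p%:R.

End PS.

(* Main.v *)
Require Import Defs.
From HB Require Import structures.
From mathcomp Require Import all_boot all_order all_algebra.
Import Order.TTheory GRing.Theory Num.Theory.
Local Open Scope ring_scope.
From Stdlib Require Import FunctionalExtensionality.
Set Implicit Arguments. Unset Strict Implicit.
Section S.
Variables (K : numClosedFieldType) (r : nat).
Implicit Types F G H : nat -> 'M[K]_r.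

Lemma psmul_rev F G i :
  psmul F G i = \sum_(j < i.+1) F (i - j)%N *m G j.
Proof.
rewrite /psmul (reindex_inj rev_ord_inj) /=.
by apply: eq_bigr => j _; rewrite (sub_ordK j).
Qed.

Lemma psmulA F G H i : psmul F (psmul G H) i = psmul (psmul F G) H i.
Proof.
rewrite [psmul (psmul _ _) _ _]psmul_rev [psmul F _ _]/psmul.
pose coef3 j k := F j *m (G (i - j - k)%N *m H k).
transitivity (\sum_(j < i.+1) \sum_(k < i.+1 | (k <= i - j)%N) coef3 j k).
  apply: eq_bigr => /= j _; rewrite psmul_rev mulmx_sumr /=.
  by rewrite (big_ord_narrow_leq (leq_subr _ _)).
rewrite (exchange_big_dep predT) //=; apply: eq_bigr => k _.
transitivity (\sum_(j < i.+1 | (j <= i - k)%N) coef3 j k).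
  apply: eq_bigl => j; rewrite -ltnS -(ltnS j) -!subSn ?leq_ord //.
  by rewrite -subn_gt0 -(subn_gt0 j) -!subnDA addnC.
rewrite (big_ord_narrow_leq (leq_subr _ _)) mulmx_suml /=.
by apply: eq_bigr => j _; rewrite /coef3 -!subnDA addnC mulmxA.
Qed.

Definition sc (x : K) F : nat -> 'M[K]_r := fun k => x ^+ k *: F k.

Lemma psmulA' F G H : psmul F (psmul G H) = psmul (psmul F G) H.
Proof. by apply: FunctionalExtensionality.functional_extensionality => i; apply: psmulA. Qed.

Lemma sc_mul x F G : sc x (psmul F G) = psmul (sc x F) (sc x G).
Proof.
apply: FunctionalExtensionality.functional_extensionality => k.
rewrite /sc /psmul scaler_sumr; apply: eq_bigr => i _.
rewrite -scalemxAr -scalemxAl scalerA -exprD.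
by rewrite subnK // -ltnS.
Qed.

Lemma sc_sc x y F : sc x (sc y F) = sc (x * y) F.
Proof.
by apply: FunctionalExtensionality.functional_extensionality => k; rewrite /sc scalerA exprMn.
Qed.

Lemma sc1 F : sc 1 F = F.
Proof.
by apply: FunctionalExtensionality.functional_extensionality => k; rewrite /sc expr1n scale1r.
Qed.

Lemma sc_one x : sc x (@psone K r) = @psone K r.
Proof.
apply: FunctionalExtensionality.functional_extensionality => k; rewrite /sc /psone.
by case: eqP => [->|_]; rewrite ?expr0 ?scale1r ?scaler0.
Qed.

Lemma psdil_sc p F : psdil p F = sc (p%:R^-1) F.
Proof.
by apply: FunctionalExtensionality.functional_extensionality => k; rewrite /sc /psdil exprVn.
Qed.

Lemma psmul1F F : psmul (@psone K r) F = F.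
Proof.
apply: FunctionalExtensionality.functional_extensionality => k.
rewrite /psmul big_ord_recl /= subn0 mul1mx big1 ?addr0 // => i _.
by rewrite /psone /= mul0mx.
Qed.

Lemma psmulF1 F : psmul F (@psone K r) = F.
Proof.
apply: FunctionalExtensionality.functional_extensionality => k.
rewrite /psmul big_ord_recr /= subnn mulmx1 big1 ?add0r // => i _.
rewrite /psone /=; case: eqP => [/eqP|_]; last by rewrite mulmx0.
by rewrite subn_eq0 leqNgt ltn_ord.
Qed.

Lemma psmul0 F G : psmul F G 0 = F 0%N *m G 0%N.
Proof. by rewrite /psmul big_ord1. Qed.

Definition zv (v : nat) (M : 'M[K]_r) : nat -> 'M[K]_r :=
  fun k => if k == v then M else 0.

Lemma psmul_zvr F M v m : psmul F (zv v M) (v + m) = F m *m M.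
Proof.
rewrite psmul_rev (bigD1 (@Ordinal (v + m).+1 v (leq_addr m v))) //= big1 ?addr0.
  by rewrite /zv eqxx addKn.
move=> i /eqP ne; rewrite /zv; case: eqP; last by rewrite mulmx0.
by move=> e; case: ne; apply: val_inj.
Qed.

Lemma psmul_zvl F M v m : psmul (zv v M) F (v + m) = M *m F m.
Proof.
rewrite /psmul (bigD1 (@Ordinal (v + m).+1 v (leq_addr m v))) //= big1 ?addr0.
  by rewrite /zv eqxx addKn.
move=> i /eqP ne; rewrite /zv; case: eqP; last by rewrite mul0mx.
by move=> e; case: ne; apply: val_inj.
Qed.
End S.

Lemma intertw (K : numClosedFieldType) n (A B X : 'M[K]_n.+1) (q : {poly K}) :
  A *m X = X *m B -> horner_mx A q *m X = X *m horner_mx B q.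
Proof.
move=> AX; elim/poly_ind: q => [|q c IH]; first by rewrite !rmorph0 mul0mx mulmx0.
rewrite !rmorphD !rmorphM /= !horner_mx_X !horner_mx_C -!mulmxE.
by rewrite mulmxDl mulmxDr -mulmxA AX mulmxA IH -mulmxA scalar_mxC.
Qed.

Lemma no_conj_eig (K : numClosedFieldType) (r p i : nat) (A0 : 'M[K]_r) :
  (2 <= p)%N -> A0 \in unitmx -> p_restricted p A0 -> (1 <= i)%N ->
  ~ conj_eigenvalue A0 (p%:R ^+ i).
Proof.
move=> hp uA res hi [X [Xn0 HX]].
case: r A0 X uA res Xn0 HX => [|n] A0 X uA res Xn0 HX.
  by move: Xn0; rewrite thinmx0 eqxx.
set l : K := p%:R ^+ i.
have p1 : (1 < p)%N by [].
have l0 : l != 0.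
  by rewrite expf_eq0 pnatr_eq0 (gtn_eqF (ltnW hp)) andbF.
have XA : X *m A0 = l *: (A0 *m X).
  by rewrite scalemxAr -HX !mulmxA mulmxV // mul1mx.
set B := l^-1 *: A0.
have AX : A0 *m X = X *m B.
  by rewrite /B -scalemxAr XA scalerA mulVf // scale1r.
have key : forall z, root (char_poly A0) z -> (B - z%:M) \in unitmx.
  move=> z rz; apply: contraT => nu.
  have : eigenvalue B z by rewrite /eigenvalue /eigenspace kermx_eq0 row_free_unit.
  case/eigenvalueP => v vB vn0.
  have ev : eigenvalue A0 (l * z).
    apply/eigenvalueP; exists v => //.
    by rewrite -scalerA -vB /B -scalemxAr scalerA mulfV // scale1r.
  have ez : eigenvalue A0 z by rewrite eigenvalue_root_char.
  have /andP[_ h1] := res _ ev; have /andP[h2 _] := res _ ez.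
  move: h1; rewrite normrM normrX normr_nat.
  move=> h1; suff : p%:R <= p%:R ^+ i * `|z| :> K by move=> hh; move: (le_lt_trans hh h1); rewrite ltxx.
  apply: (le_trans (y := p%:R ^+ i)); last by rewrite ler_peMr // exprn_ge0.
  by rewrite -{1}(expr1 p%:R) ler_eXn2l // ?ltr1n.
have CH : X *m horner_mx B (char_poly A0) = 0 by rewrite -(intertw _ AX) Cayley_Hamilton mul0mx.
have [rs Hrs] := closed_field_poly_normal (char_poly A0).
move: CH; rewrite Hrs (monicP (char_poly_monic A0)) scale1r.
have : all (root (char_poly A0)) rs.
  apply/allP => z zin; rewrite Hrs (monicP (char_poly_monic A0)) scale1r.
  by rewrite root_prod_XsubC.
elim: rs {Hrs} X Xn0 {HX XA AX} => [|z rs IH] X Xn0 /= hall.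
  by rewrite big_nil rmorph1 mulmx1 => /eqP; rewrite (negbTE Xn0).
move: hall => /andP[rz hall].
rewrite big_cons rmorphM /= -mulmxE mulmxA => /IH; apply => //.
rewrite rmorphB /= horner_mx_X horner_mx_C.
apply: contra Xn0 => /eqP e.
by rewrite -(mulmxK (key _ rz) X) e mul0mx.
Qed.

Theorem lemma5p1 (K : numClosedFieldType) (r p R : nat) (v : nat)
    (A : nat -> 'M[K]_r) (C C' : nat -> 'M[K]_r) (A0 A0' : 'M[K]_r) :
  (2 <= p)%N -> (1 <= R)%N ->
  laurent_GL v A ->
  in_I_zR R C -> in_I_zR R C' ->
  A0 \in unitmx -> A0' \in unitmx ->
  mahler_gauge p v A C A0 -> mahler_gauge p v A C' A0' ->
  [/\ A0 = A0',
      (forall i : nat, (R <= i)%N -> ~ conj_eigenvalue A0 (p%:R ^+ i)) ->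
        forall k, C k = C' k
    & p_restricted p A0 ->
        forall i : nat, (1 <= i)%N -> ~ conj_eigenvalue A0 (p%:R ^+ i)].
Proof.
move=> hp hR _ [C0 CR] [C0' CR'] uA uA' [D [DC [CD HD]]] [D' [DC' [CD' HD']]].
have p0 : p%:R != 0 :> K by rewrite pnatr_eq0 (gtn_eqF (ltnW hp)).
have eHD : psmul (psmul D A) C = zv v A0.
  by apply: functional_extensionality => k; rewrite HD.
have eHD' : psmul (psmul D' A) C' = zv v A0'.
  by apply: functional_extensionality => k; rewrite HD'.
set G := psmul D (psdil p C').
have scC : forall F : nat -> 'M[K]_r, sc p%:R (psdil p F) = F.
  by move=> F; rewrite psdil_sc sc_sc mulfV // sc1.
have key : psmul G (zv v A0') = psmul (zv v A0) (sc p%:R G).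
  rewrite /G sc_mul scC -eHD -eHD'.
  rewrite -psmulA' [psmul (psdil p C') _]psmulA' [psmul (psdil p C') _]psmulA' CD' psmul1F.
  rewrite -!psmulA' [psmul C (psmul _ _)]psmulA'.
  have -> : psmul C (sc p%:R D) = psone K r.
    by rewrite -{1}(scC C) -sc_mul CD sc_one.
  by rewrite psmul1F.
have D0 : D 0%N = 1%:M.
  have := congr1 (fun F => F 0%N) DC; rewrite /= psmul0 /psdil C0 expr0 invr1 scale1r mulmx1.
  by [].
have G0 : G 0%N = 1%:M.
  by rewrite /G psmul0 D0 /psdil C0' expr0 invr1 scale1r mul1mx.
have keym : forall m, G m *m A0' = A0 *m (p%:R ^+ m *: G m).
  by move=> m; rewrite -(psmul_zvr G A0' v m) key psmul_zvl.
have eA : A0 = A0'.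
  by have := keym 0%N; rewrite G0 expr0 scale1r mul1mx mulmx1.
split => //; last by move=> res i hi; apply: no_conj_eig.
move=> noeig.
have Dz : forall m, (0 < m < R)%N -> D m = 0.
  move=> m /andP[m0 mR].
  have := congr1 (fun F => F m) DC; rewrite /= /psmul big_ord_recr /= subnn.
  rewrite big1 ?add0r.
    by rewrite /psdil C0 expr0 invr1 scale1r mulmx1 /psone (gtn_eqF m0).
  move=> i _; rewrite /psdil CR ?scaler0 ?mulmx0 // subn_gt0 ltn_ord /=.
  exact: leq_ltn_trans (leq_subr _ _) mR.
have G1 : G = psone K r.
  apply: functional_extensionality => m.
  case: (posnP m) => [->|m0]; first by rewrite G0.
  rewrite /psone (gtn_eqF m0).
  case: (ltnP m R) => mR.
    rewrite /G /psmul big1 // => i _.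
    case: (posnP i) => [i0|i0].
      by rewrite i0 subn0 /psdil CR' ?m0 // scaler0 mulmx0.
    by rewrite Dz ?mul0mx // i0 /= (leq_ltn_trans _ mR) // -ltnS.
  apply/eqP; apply: contraT => Gn0; case: (noeig m mR); exists (G m); split => //.
  have km := keym m; rewrite -eA in km.
  by rewrite -mulmxA km mulKmx.
move=> k.
have eCp : psdil p C' = psdil p C.
  by rewrite -[psdil p C']psmul1F -CD -psmulA' -/G G1 psmulF1.
have := congr1 (sc p%:R) eCp; rewrite !scC => ->; by [].
Qed.
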